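(* (Completeness.) For every finite multiset $\Gamma$ of ILL formulae and every ILL formula $\varphi$: if $\Gamma\Vdash\varphi$ (i.e. $\Gamma\Vdash^{\varnothing}_{\mathcal{B}}\varphi$ for every base $\mathcal{B}$), then $\Gamma\vdash\varphi$ is derivable in $\mathrm{N_{ILL}}$.
   Context: Fix a set $\mathbb{A}$ of propositional atoms. ILL formulae: $\phi ::= p\in\mathbb{A} \mid \top \mid 0 \mid 1 \mid \phi\multimap\phi \mid \phi\otimes\phi \mid \phi\,\&\,\phi \mid \phi\oplus\phi \mid\ !\phi$. All multisets are finite; ''$\Gamma,\Delta$'' denotes multiset union. Natural deduction $\mathrm{N_{ILL}}$: $\Gamma\vdash\varphi$ is defined inductively by: (Ax) $\varphi\vdash\varphi$; ($\multimap$I) from $\Gamma,\phi\vdash\psi$ infer $\Gamma\vdash\phi\multimap\psi$; ($\multimap$E) from $\Gamma\vdash\phi\multimap\psi$ and $\Delta\vdash\phi$ infer $\Gamma,\Delta\vdash\psi$; ($\otimes$I) from $\Gamma\vdash\phi$, $\Delta\vdash\psi$ infer $\Gamma,\Delta\vdash\phi\otimes\psi$; ($\otimes$E) from $\Gamma\vdash\phi\otimes\psi$ and $\Delta,\phi,\psi\vdash\chi$ infer $\Gamma,\Delta\vdash\chi$; ($1$I) $\vdash 1$; ($1$E) from $\Gamma\vdash 1$, $\Delta\vdash\phi$ infer $\Gamma,\Delta\vdash\phi$; ($\&$I) from $\Gamma\vdash\phi$, $\Gamma\vdash\psi$ infer $\Gamma\vdash\phi\&\psi$; ($\&$E) from $\Gamma\vdash\phi\&\psi$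 infer $\Gamma\vdash\phi$ and infer $\Gamma\vdash\psi$; ($\oplus$I) from $\Gamma\vdash\phi$ (or $\Gamma\vdash\psi$) infer $\Gamma\vdash\phi\oplus\psi$; ($\oplus$E) from $\Gamma\vdash\phi\oplus\psi$, $\Delta,\phi\vdash\chi$, $\Delta,\psi\vdash\chi$ infer $\Gamma,\Delta\vdash\chi$; ($\top$I) for $n\ge0$, from $\Gamma_i\vdash\phi_i$ ($i=1..n$) infer $\Gamma_1,\dots,\Gamma_n\vdash\top$; ($0$E) for $n\ge 0$, from $\Gamma_i\vdash\phi_i$ ($i=1..n$) and $\Delta\vdash 0$ infer $\Gamma_1,\dots,\Gamma_n,\Delta\vdash\chi$; (Prom$_n$) for $n\ge0$, from $\Gamma_i\vdash\,!\psi_i$ ($i=1..n$) and $!\psi_1,\dots,!\psi_n\vdash\phi$ infer $\Gamma_1,\dots,\Gamma_n\vdash\,!\phi$; (Der) from $\Gamma\vdash\,!\phi$, $\Delta,\phi\vdash\psi$ infer $\Gamma,\Delta\vdash\psi$; (Wk) from $\Gamma\vdash\,!\phi$, $\Delta\vdash\psi$ infer $\Gamma,\Delta\vdash\psi$; (Ctr) from $\Gamma\vdash\,!\phi$, $\Delta,!\phi,!\phi\vdash\psi$ infer $\Gamma,\Delta\vdash\psi$. Atomic rules and bases: an atomic sequent is $P\Rightarrow p$ with $P$ a multiset of atoms, $p$ an atom. An atomic box is a multiset of atomic sequents. An atomic rule is a triple $\langle\mathbf{A},\mathbf{S},p\rangle$ with $\mathbf{A}$ a multiset of atomic boxes, $\mathbf{S}$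 an atomic box, $p$ an atom. A base is a set of atomic rules. An atom $p$ is persistent in $\mathcal{B}$ if some $\langle\varnothing,\mathbf{S},p\rangle\in\mathcal{B}$ has $\mathbf{S}\neq\varnothing$. Derivability $\vdash_{\mathcal{B}}$ between atomic multisets and atoms is defined inductively: (Ref) $p\vdash_{\mathcal{B}}p$; (App) if $\langle\mathbf{A},\mathbf{S},p\rangle\in\mathcal{B}$ with $\mathbf{A}=\{\mathbf{T}_1,\dots,\mathbf{T}_m\}$, and there are atomic multisets $C_1,\dots,C_n$ ($n\ge m$) and a multiset $D=\{d_{m+1},\dots,d_n\}$ of atoms persistent in $\mathcal{B}$ such that $C_i,Q\vdash_{\mathcal{B}}q$ for every $i\le m$ and every $Q\Rightarrow q\in\mathbf{T}_i$, $C_j\vdash_{\mathcal{B}}d_j$ for every $m<j\le n$, and $D,U\vdash_{\mathcal{B}}v$ for every $U\Rightarrow v\in\mathbf{S}$, then $C_1,\dots,C_n\vdash_{\mathcal{B}}p$. Support $\Vdash^L_{\mathcal{B}}$ (base $\mathcal{B}$, atomic multiset $L$), defined by induction on formulae: $\Vdash^L_{\mathcal{B}}p$ iff $L\vdash_{\mathcal{B}}p$; $\Vdash^L_{\mathcal{B}}\varphi\multimap\psi$ iff $\varphi\Vdash^L_{\mathcal{B}}\psi$; $\Vdash^L_{\mathcal{B}}\varphi\otimes\psi$ iff for all $\mathcal{C}\supseteq\mathcal{B}$, atomic multisets $K$, atoms $p$: if $\varphi,\psi\Vdash^K_{\mathcal{C}}p$ then $\Vdash^{L,K}_{\mathcal{C}}p$;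 $\Vdash^L_{\mathcal{B}}1$ iff for all $\mathcal{C}\supseteq\mathcal{B}$, $K$, $p$: if $\Vdash^K_{\mathcal{C}}p$ then $\Vdash^{L,K}_{\mathcal{C}}p$; $\Vdash^L_{\mathcal{B}}\varphi\&\psi$ iff $\Vdash^L_{\mathcal{B}}\varphi$ and $\Vdash^L_{\mathcal{B}}\psi$; $\Vdash^L_{\mathcal{B}}\varphi\oplus\psi$ iff for all $\mathcal{C}\supseteq\mathcal{B}$, $K$, $p$: if $\varphi\Vdash^K_{\mathcal{C}}p$ and $\psi\Vdash^K_{\mathcal{C}}p$ then $\Vdash^{L,K}_{\mathcal{C}}p$; $\Vdash^L_{\mathcal{B}}0$ iff $\Vdash^{L,K}_{\mathcal{B}}p$ for all atoms $p$ and atomic multisets $K$; $\Vdash^L_{\mathcal{B}}\top$ always; $\Vdash^L_{\mathcal{B}}!\varphi$ iff for all $\mathcal{C}\supseteq\mathcal{B}$, $K$, $p$: if (for all $\mathcal{D}\supseteq\mathcal{C}$, $\Vdash^{\varnothing}_{\mathcal{D}}\varphi$ implies $\Vdash^K_{\mathcal{D}}p$) then $\Vdash^{L,K}_{\mathcal{C}}p$. For nonempty multisets: $\Vdash^L_{\mathcal{B}}\Gamma,\Delta$ iff $L=K,M$ for some $K,M$ with $\Vdash^K_{\mathcal{B}}\Gamma$ and $\Vdash^M_{\mathcal{B}}\Delta$. For a nonempty antecedent written as $!\Delta,\Theta$, where $!\Delta$ collects the formulae whose top-level connective is $!$ (with $\Delta$ the formulae under those $!$) and $\Theta$ contains none: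 $!\Delta,\Theta\Vdash^L_{\mathcal{B}}\varphi$ iff for all $\mathcal{C}\supseteq\mathcal{B}$ and atomic $K$, if $\Vdash^{\varnothing}_{\mathcal{C}}\delta$ for every $\delta\in\Delta$ and $\Vdash^K_{\mathcal{C}}\Theta$ then $\Vdash^{L,K}_{\mathcal{C}}\varphi$ (when $\Theta$ is empty, $K$ is empty). An empty antecedent: $\varnothing\Vdash^L_{\mathcal{B}}\varphi$ means $\Vdash^L_{\mathcal{B}}\varphi$. A sequent $(\Gamma:\varphi)$ is valid, written $\Gamma\Vdash\varphi$, iff $\Gamma\Vdash^{\varnothing}_{\mathcal{B}}\varphi$ for all bases $\mathcal{B}$. *)

(* Defs.v *)
(* Intuitionistic linear logic (ILL): natural deduction N_ILL
   and base-extension semantics (support). Multisets are represented by lists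
   taken up to permutation (Stdlib's [Permutation]). *)
From Stdlib Require Import List Permutation.
Import ListNotations.

Definition atom := nat.

Inductive formula : Type :=
| Atom   : atom -> formula
| Top    : formula
| Zero   : formula
| One    : formula
| Limp   : formula -> formula -> formula
| Tensor : formula -> formula -> formula
| With   : formula -> formula -> formula
| Plus   : formula -> formula -> formula
| Bang   : formula -> formula.

(** * Natural deduction N_ILL.  [nd Γ φ] : Γ ⊢ φ, Γ a multiset (list up to
    permutation, rule [nd_perm]). Rules with n premises take a list [prems]
    of (Γ_i, φ_i) pairs. *)
Inductive nd : list formula -> formula -> Prop :=
| nd_perm Γ Γ' φ : Permutation Γ Γ' -> nd Γ φ -> nd Γ' φ
| nd_ax φ : nd [φ] φ
| nd_limpI Γ φ ψ : nd (Γ ++ [φ]) ψ -> nd Γ (Limp φ ψ)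
| nd_limpE Γ Δ φ ψ : nd Γ (Limp φ ψ) -> nd Δ φ -> nd (Γ ++ Δ) ψ
| nd_tensorI Γ Δ φ ψ : nd Γ φ -> nd Δ ψ -> nd (Γ ++ Δ) (Tensor φ ψ)
| nd_tensorE Γ Δ φ ψ χ :
    nd Γ (Tensor φ ψ) -> nd (Δ ++ [φ; ψ]) χ -> nd (Γ ++ Δ) χ
| nd_oneI : nd [] One
| nd_oneE Γ Δ φ : nd Γ One -> nd Δ φ -> nd (Γ ++ Δ) φ
| nd_withI Γ φ ψ : nd Γ φ -> nd Γ ψ -> nd Γ (With φ ψ)
| nd_withE1 Γ φ ψ : nd Γ (With φ ψ) -> nd Γ φ
| nd_withE2 Γ φ ψ : nd Γ (With φ ψ) -> nd Γ ψ
| nd_plusI1 Γ φ ψ : nd Γ φ -> nd Γ (Plus φ ψ)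
| nd_plusI2 Γ φ ψ : nd Γ ψ -> nd Γ (Plus φ ψ)
| nd_plusE Γ Δ φ ψ χ :
    nd Γ (Plus φ ψ) -> nd (Δ ++ [φ]) χ -> nd (Δ ++ [ψ]) χ -> nd (Γ ++ Δ) χ
| nd_topI (prems : list (list formula * formula)) :
    (forall G f, In (G, f) prems -> nd G f) ->
    nd (concat (map fst prems)) Top
| nd_zeroE (prems : list (list formula * formula)) Δ χ :
    (forall G f, In (G, f) prems -> nd G f) ->
    nd Δ Zero ->
    nd (concat (map fst prems) ++ Δ) χ
| nd_prom (prems : list (list formula * formula)) φ :
    (forall G ψ, In (G, ψ) prems -> nd G (Bang ψ)) ->
    nd (map (fun pr => Bang (snd pr)) prems) φ ->
    nd (concat (map fst prems)) (Bang φ)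
| nd_der Γ Δ φ ψ : nd Γ (Bang φ) -> nd (Δ ++ [φ]) ψ -> nd (Γ ++ Δ) ψ
| nd_wk Γ Δ φ ψ : nd Γ (Bang φ) -> nd Δ ψ -> nd (Γ ++ Δ) ψ
| nd_ctr Γ Δ φ ψ :
    nd Γ (Bang φ) -> nd (Δ ++ [Bang φ; Bang φ]) ψ -> nd (Γ ++ Δ) ψ.

Definition atomic_sequent := (list atom * atom)%type.
Definition box := list atomic_sequent.
Definition rule := (list box * box * atom)%type.
Definition base := rule -> Prop.

Definition extends (B C : base) : Prop := forall r, B r -> C r.

Definition persistent (B : base) (p : atom) : Prop :=
  exists S : box, B ([], S, p) /\ S <> [].

(* [deriv B L p] : L ⊢_B p.  In [d_app], the rule is ⟨A,S,p⟩ with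
   A = [T_1;...;T_m] paired with [Cs] = [C_1;...;C_m], and
   [ext] = [(C_{m+1}, d_{m+1}); ...; (C_n, d_n)], so D = map snd ext. *)
Inductive deriv (B : base) : list atom -> atom -> Prop :=
| d_perm L L' p : Permutation L L' -> deriv B L p -> deriv B L' p
| d_ref p : deriv B [p] p
| d_app (A : list box) (S : box) (p : atom)
        (Cs : list (list atom)) (ext : list (list atom * atom)) :
    B (A, S, p) ->
    length Cs = length A ->
    (forall T C, In (T, C) (combine A Cs) ->
       forall Q q, In (Q, q) T -> deriv B (C ++ Q) q) ->
    (forall C d, In (C, d) ext -> persistent B d) ->
    (forall C d, In (C, d) ext -> deriv B C d) ->
    (forall U v, In (U, v) S -> deriv B (map snd ext ++ U) v) ->
    deriv B (concat Cs ++ concat (map fst ext)) p.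

(* Semantic content of an antecedent formula: either !δ (carrying the
   predicate C ↦ ⊩^∅_C δ) or a non-! formula θ (carrying (C,K) ↦ ⊩^K_C θ). *)
Inductive item : Type :=
| IBang  : (base -> Prop) -> item
| IPlain : (base -> list atom -> Prop) -> item.

Fixpoint bang_items (xs : list item) : list (base -> Prop) :=
  match xs with
  | [] => []
  | IBang b :: xs' => b :: bang_items xs'
  | IPlain _ :: xs' => bang_items xs'
  end.

Fixpoint plain_items (xs : list item) : list (base -> list atom -> Prop) :=
  match xs with
  | [] => []
  | IBang _ :: xs' => plain_items xs'
  | IPlain f :: xs' => f :: plain_items xs'
  end.

(* ⊩^K_C Θ for a multiset Θ (given by semantic items); the empty Θ forces
   K empty (convention "when Θ is empty, K is empty"). *)
Fixpoint supp_multi (C : base) (K : list atom)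
         (fs : list (base -> list atom -> Prop)) : Prop :=
  match fs with
  | [] => K = []
  | [f] => f C K
  | f :: fs' => exists K1 K2, Permutation K (K1 ++ K2) /\ f C K1 /\
                              supp_multi C K2 fs'
  end.

(* !Δ,Θ ⊩^L_B χ, with the succedent given semantically by [concl]. *)
Definition sem_seq (B : base) (L : list atom) (ant : list item)
           (concl : base -> list atom -> Prop) : Prop :=
  match ant with
  | [] => concl B L
  | _ => forall C, extends B C -> forall K : list atom,
           (forall b, In b (bang_items ant) -> b C) ->
           supp_multi C K (plain_items ant) ->
           concl C (L ++ K)
  end.

Fixpoint supp (B : base) (L : list atom) (φ : formula) {struct φ} : Prop :=
  match φ with
  | Atom p => deriv B L p
  | Limp a b =>
      sem_seq B L
        [match a with
         | Bang d => IBang (fun C => supp C [] d)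
         | _ => IPlain (fun C K => supp C K a)
         end]
        (fun C M => supp C M b)
  | Tensor a b =>
      forall C, extends B C -> forall (K : list atom) (p : atom),
        sem_seq C K
          [match a with
           | Bang d => IBang (fun D => supp D [] d)
           | _ => IPlain (fun D M => supp D M a)
           end;
           match b with
           | Bang d => IBang (fun D => supp D [] d)
           | _ => IPlain (fun D M => supp D M b)
           end]
          (fun D M => deriv D M p) ->
        deriv C (L ++ K) p
  | One =>
      forall C, extends B C -> forall (K : list atom) (p : atom),
        deriv C K p -> deriv C (L ++ K) p
  | With a b => supp B L a /\ supp B L b
  | Plus a b =>
      forall C, extends B C -> forall (K : list atom) (p : atom),
        sem_seq C K
          [match a with
           | Bang d => IBang (fun D => supp D [] d)
           | _ => IPlain (fun D M => supp D M a)
           end]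
          (fun D M => deriv D M p) ->
        sem_seq C K
          [match b with
           | Bang d => IBang (fun D => supp D [] d)
           | _ => IPlain (fun D M => supp D M b)
           end]
          (fun D M => deriv D M p) ->
        deriv C (L ++ K) p
  | Zero => forall (p : atom) (K : list atom), deriv B (L ++ K) p
  | Top => True
  | Bang a =>
      forall C, extends B C -> forall (K : list atom) (p : atom),
        (forall D, extends C D -> supp D [] a -> deriv D K p) ->
        deriv C (L ++ K) p
  end.

Definition item_of (φ : formula) : item :=
  match φ with
  | Bang d => IBang (fun C => supp C [] d)
  | _ => IPlain (fun C K => supp C K φ)
  end.

Definition seq_supp (B : base) (L : list atom) (Γ : list formula)
           (φ : formula) : Prop :=
  sem_seq B L (map item_of Γ) (fun C M => supp C M φ).

Definition valid (Γ : list formula) (φ : formula) : Prop :=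
  forall B : base, seq_supp B [] Γ φ.

(* Main.v *)
Require Import Defs.
From Stdlib Require Import List Permutation Lia PeanoNat.
Import ListNotations.

Lemma ext_refl B : extends B B.
Proof. intros r H; exact H. Qed.
Lemma ext_trans B C D : extends B C -> extends C D -> extends B D.
Proof. intros H1 H2 r H; auto. Qed.

Lemma persistent_mono B C p : extends B C -> persistent B p -> persistent C p.
Proof. intros H [S [HS Hne]]. exists S; split; auto. Qed.

Lemma deriv_mono B C L p : extends B C -> deriv B L p -> deriv C L p.
Proof.
  intros HBC H. induction H.
  - eapply d_perm; eauto.
  - apply d_ref.
  - apply (d_app C A S p Cs ext); auto.
    intros; eapply persistent_mono; eauto.
Qed.

Lemma supp_perm χ : forall B L L', Permutation L L' -> supp B L χ -> supp B L' χ.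
Proof.
  induction χ; simpl; intros B L L' HP H.
  - eapply d_perm; eauto.
  - exact I.
  - intros p K. apply d_perm with (L ++ K); auto. apply Permutation_app_tail; auto.
  - intros C HC K p Hd. apply d_perm with (L ++ K); auto. apply Permutation_app_tail; auto.
  - unfold sem_seq in *. intros C HC K Hb Hm. apply IHχ2 with (L ++ K); auto.
    apply Permutation_app_tail; auto.
  - intros C HC K p Hs. apply d_perm with (L ++ K); auto. apply Permutation_app_tail; auto.
  - destruct H; split; eauto.
  - intros C HC K p H1 H2. apply d_perm with (L ++ K); auto. apply Permutation_app_tail; auto.
  - intros C HC K p H1. apply d_perm with (L ++ K); auto. apply Permutation_app_tail; auto.
Qed.

Lemma supp_mono χ : forall B C L, extends B C -> supp B L χ -> supp C L χ.
Proof.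
  induction χ; simpl; intros B C L HBC H.
  - eapply deriv_mono; eauto.
  - exact I.
  - intros p K. eapply deriv_mono; eauto.
  - intros C' HC' K p Hd. apply H; eauto using ext_trans.
  - unfold sem_seq in *. intros C' HC' K Hb Hm. apply H; eauto using ext_trans.
  - intros C' HC' K p Hs. apply H; eauto using ext_trans.
  - destruct H; split; eauto.
  - intros C' HC' K p H1 H2. apply H; eauto using ext_trans.
  - intros C' HC' K p H1. apply H; eauto using ext_trans.
Qed.

Definition hold (B : base) (K : list atom) (a : formula) : Prop :=
  match a with
  | Bang d => supp B [] d /\ K = []
  | _ => supp B K a
  end.

Lemma bang_dec a : {d | a = Bang d} +
  {item_of a = IPlain (fun C K => supp C K a) /\ forall C K, hold C K a = supp C K a}.
Proof. destruct a; try (right; split; reflexivity). left; eauto. Qed.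

Lemma hold_mono a B C K : extends B C -> hold B K a -> hold C K a.
Proof.
  destruct (bang_dec a) as [[d ->]|[_ Ha]]; simpl.
  - intros H [H1 H2]; split; eauto using supp_mono.
  - rewrite !Ha. apply supp_mono.
Qed.

Lemma hold_supp a B K : hold B K a -> supp B K a.
Proof.
  destruct (bang_dec a) as [[d ->]|[_ Ha]]; simpl.
  - intros [H ->]. intros C HC K p Hd. apply Hd; [apply ext_refl|]. eapply supp_mono; eauto.
  - rewrite Ha; auto.
Qed.

Lemma sem1 B L a (concl : base -> list atom -> Prop) :
  sem_seq B L [item_of a] concl <->
  forall C, extends B C -> forall K, hold C K a -> concl C (L ++ K).
Proof.
  destruct (bang_dec a) as [[d ->]|[Ea Ha]].
  - unfold sem_seq; simpl. split.
    + intros H C HC K [H1 H2]. apply H; auto. intros b [<-|[]]; auto.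
    + intros H C HC K Hb Hm. apply H; auto. split; auto.
      apply (Hb (fun C0 => supp C0 [] d)); left; reflexivity.
  - rewrite Ea. unfold sem_seq; simpl. split.
    + intros H C HC K Hh. apply H; auto. intros b []. rewrite <- Ha; auto.
    + intros H C HC K Hb Hm. apply H; auto. rewrite Ha; auto.
Qed.

Lemma sem2 B L a b (concl : base -> list atom -> Prop)
  (Hc : forall C M M', Permutation M M' -> concl C M -> concl C M') :
  sem_seq B L [item_of a; item_of b] concl <->
  forall C, extends B C -> forall Ka Kb, hold C Ka a -> hold C Kb b ->
    concl C (L ++ (Ka ++ Kb)).
Proof.
  destruct (bang_dec a) as [[d ->]|[Ea Ha]];
  destruct (bang_dec b) as [[e ->]|[Eb Hb]];
  try rewrite Ea; try rewrite Eb; unfold sem_seq; simpl; split.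
  - intros H C HC Ka Kb [H1 ->] [H2 ->]. apply H; auto. intros x [<-|[<-|[]]]; auto.
  - intros H C HC K Hbg ->. apply (H C HC [] []); split; auto.
    + apply Hbg; left; reflexivity.
    + apply Hbg; right; left; reflexivity.
  - intros H C HC Ka Kb [H1 ->] H2. simpl. apply H; auto.
    + intros x [<-|[]]; auto.
    + rewrite <- Hb; auto.
  - intros H C HC K Hbg Hm. apply (H C HC [] K).
    + split; auto. apply Hbg; left; reflexivity.
    + rewrite Hb; auto.
  - intros H C HC Ka Kb H1 [H2 ->]. rewrite app_nil_r. apply H; auto.
    + intros x [<-|[]]; auto.
    + rewrite <- Ha; auto.
  - intros H C HC K Hbg Hm.
    replace (L ++ K) with (L ++ (K ++ [])) by (rewrite app_nil_r; auto).
    apply (H C HC K []).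
    + rewrite Ha; auto.
    + split; auto. apply Hbg; left; reflexivity.
  - intros H C HC Ka Kb H1 H2. apply H; auto.
    + intros x [].
    + exists Ka, Kb. rewrite <- Ha, <- Hb. auto.
  - intros H C HC K Hbg [K1 [K2 [HP [H1 H2]]]].
    eapply Hc; [apply Permutation_app_head; symmetry; exact HP|].
    apply H; auto. rewrite Ha; auto. rewrite Hb; auto.
Qed.

Inductive hl (C : base) : list atom -> list formula -> Prop :=
| hl_nil : hl C [] []
| hl_cons K1 K2 a G : hold C K1 a -> hl C K2 G -> hl C (K1 ++ K2) (a :: G).

Lemma supp_multi_cons C K1 K2 f fs :
  f C K1 -> supp_multi C K2 fs -> supp_multi C (K1 ++ K2) (f :: fs).
Proof.
  intros H1 H2. destruct fs.
  - simpl in *. subst. rewrite app_nil_r. auto.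
  - exists K1, K2. auto.
Qed.

Lemma hl_items C K G : hl C K G ->
  (forall b, In b (bang_items (map item_of G)) -> b C) /\
  exists K', Permutation K K' /\ supp_multi C K' (plain_items (map item_of G)).
Proof.
  induction 1 as [|K1 K2 a G Hh Hl [IH1 [K' [HP IH2]]]].
  - simpl. split; [intros b []| exists []; auto].
  - simpl map. destruct (bang_dec a) as [[d ->]|[Ea Ha]].
    + destruct Hh as [Hs ->]. simpl. split.
      * intros b [<-|Hb]; [exact Hs| exact (IH1 b Hb)].
      * exists K'. auto.
    + rewrite Ea. cbn [bang_items plain_items]. split; [exact IH1|].
      exists (K1 ++ K'). split. apply Permutation_app_head; auto.
      apply supp_multi_cons; auto. rewrite <- Ha; auto.
Qed.

Lemma sem_list B L G (concl : base -> list atom -> Prop)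
  (Hc : forall C M M', Permutation M M' -> concl C M -> concl C M') :
  G <> [] -> sem_seq B L (map item_of G) concl ->
  forall C, extends B C -> forall K, hl C K G -> concl C (L ++ K).
Proof.
  intros Hne H C HC K Hl. destruct G as [|a G]; [congruence|].
  apply hl_items in Hl as [Hb [K' [HP Hm]]].
  unfold sem_seq in H. simpl in H.
  eapply Hc; [apply Permutation_app_head; symmetry; exact HP|].
  apply H; auto.
Qed.

Lemma app_simple B A p Cs : B (A, [], p) -> length Cs = length A ->
  (forall T C, In (T, C) (combine A Cs) -> forall Q q, In (Q, q) T -> deriv B (C ++ Q) q) ->
  deriv B (concat Cs) p.
Proof.
  intros H1 H2 H3. rewrite <- (app_nil_r (concat Cs)).
  change (deriv B (concat Cs ++ concat (map fst (@nil (list atom * atom)))) p).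
  apply d_app with (A := A) (S := []); auto.
  - intros C d [].
  - intros C d [].
  - intros U v [].
Qed.

Lemma app1 B Q1 q1 p C1 : B ([[(Q1,q1)]], [], p) -> deriv B (C1 ++ Q1) q1 -> deriv B C1 p.
Proof.
  intros H1 H2. rewrite <- (app_nil_r C1).
  apply (app_simple B _ p [C1] H1 eq_refl).
  intros T C [E|[]]; inversion E; subst. intros Q q [E'|[]]; inversion E'; subst; auto.
Qed.

Lemma app1b B Q1 q1 Q2 q2 p C1 : B ([[(Q1,q1);(Q2,q2)]], [], p) ->
  deriv B (C1 ++ Q1) q1 -> deriv B (C1 ++ Q2) q2 -> deriv B C1 p.
Proof.
  intros H1 H2 H3. rewrite <- (app_nil_r C1).
  apply (app_simple B _ p [C1] H1 eq_refl).
  intros T C [E|[]]; inversion E; subst.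
  intros Q q [E'|[E'|[]]]; inversion E'; subst; auto.
Qed.

Lemma app2 B Q1 q1 Q2 q2 p C1 C2 : B ([[(Q1,q1)];[(Q2,q2)]], [], p) ->
  deriv B (C1 ++ Q1) q1 -> deriv B (C2 ++ Q2) q2 -> deriv B (C1 ++ C2) p.
Proof.
  intros H1 H2 H3. rewrite <- (app_nil_r C2).
  apply (app_simple B _ p [C1; C2] H1 eq_refl).
  intros T C [E|[E|[]]]; inversion E; subst;
  intros Q q [E'|[]]; inversion E'; subst; auto.
Qed.

Lemma app2b B Q1 q1 Q2 q2 Q3 q3 p C1 C2 : B ([[(Q1,q1)];[(Q2,q2);(Q3,q3)]], [], p) ->
  deriv B (C1 ++ Q1) q1 -> deriv B (C2 ++ Q2) q2 -> deriv B (C2 ++ Q3) q3 ->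
  deriv B (C1 ++ C2) p.
Proof.
  intros H1 H2 H3 H4. rewrite <- (app_nil_r C2).
  apply (app_simple B _ p [C1; C2] H1 eq_refl).
  intros T C [E|[E|[]]]; inversion E; subst.
  - intros Q q [E'|[]]; inversion E'; subst; auto.
  - intros Q q [E'|[E'|[]]]; inversion E'; subst; auto.
Qed.

Lemma app0 B p : B ([], [], p) -> deriv B [] p.
Proof.
  intros H. apply (app_simple B [] p [] H eq_refl). intros T C [].
Qed.

Lemma appz B z p C1 C2 : B ([[([],z)]; []], [], p) -> deriv B C1 z -> deriv B (C1 ++ C2) p.
Proof.
  intros H1 H2. rewrite <- (app_nil_r C2).
  apply (app_simple B _ p [C1; C2] H1 eq_refl).
  intros T C [E|[E|[]]]; inversion E; subst.
  - intros Q q [E'|[]]; inversion E'; subst; rewrite app_nil_r; auto.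
  - intros Q q [].
Qed.

Lemma appt B p C : B ([[]], [], p) -> deriv B C p.
Proof.
  intros H1. rewrite <- (app_nil_r C).
  apply (app_simple B _ p [C] H1 eq_refl).
  intros T C' [E|[]]; inversion E; subst. intros Q q [].
Qed.

Lemma appbang B q p : B ([], [([], q)], p) -> deriv B [] q -> deriv B [] p.
Proof.
  intros H1 H2.
  change (deriv B (concat [] ++ concat (map fst (@nil (list atom * atom)))) p).
  apply d_app with (A := []) (S := [([], q)]); auto.
  - intros T C [].
  - intros C d [].
  - intros C d [].
  - intros U v [E|[]]; inversion E; subst. auto.
Qed.

Inductive U (fl : formula -> atom) (InS : formula -> Prop) : rule -> Prop :=
| u_limpI a b : InS (Limp a b) -> U fl InS ([[([fl a], fl b)]], [], fl (Limp a b))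
| u_limpE a b : InS (Limp a b) -> U fl InS ([[([], fl (Limp a b))]; [([], fl a)]], [], fl b)
| u_tenI a b : InS (Tensor a b) -> U fl InS ([[([], fl a)]; [([], fl b)]], [], fl (Tensor a b))
| u_tenE a b p : InS (Tensor a b) ->
    U fl InS ([[([], fl (Tensor a b))]; [([fl a; fl b], p)]], [], p)
| u_oneI : InS One -> U fl InS ([], [], fl One)
| u_oneE p : InS One -> U fl InS ([[([], fl One)]; [([], p)]], [], p)
| u_withI a b : InS (With a b) -> U fl InS ([[([], fl a); ([], fl b)]], [], fl (With a b))
| u_withE1 a b : InS (With a b) -> U fl InS ([[([], fl (With a b))]], [], fl a)
| u_withE2 a b : InS (With a b) -> U fl InS ([[([], fl (With a b))]], [], fl b)
| u_plusI1 a b : InS (Plus a b) -> U fl InS ([[([], fl a)]], [], fl (Plus a b))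
| u_plusI2 a b : InS (Plus a b) -> U fl InS ([[([], fl b)]], [], fl (Plus a b))
| u_plusE a b p : InS (Plus a b) ->
    U fl InS ([[([], fl (Plus a b))]; [([fl a], p); ([fl b], p)]], [], p)
| u_zeroE p : InS Zero -> U fl InS ([[([], fl Zero)]; []], [], p)
| u_topI : InS Top -> U fl InS ([[]], [], fl Top)
| u_bangI d : InS (Bang d) -> U fl InS ([], [([], fl d)], fl (Bang d))
| u_der d p : InS (Bang d) -> U fl InS ([[([], fl (Bang d))]; [([fl d], p)]], [], p)
| u_wk d p : InS (Bang d) -> U fl InS ([[([], fl (Bang d))]; [([], p)]], [], p)
| u_ctr d p : InS (Bang d) ->
    U fl InS ([[([], fl (Bang d))]; [([fl (Bang d); fl (Bang d)], p)]], [], p).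

Definition closed (InS : formula -> Prop) : Prop :=
  forall χ, InS χ -> match χ with
    | Limp a b | Tensor a b | With a b | Plus a b => InS a /\ InS b
    | Bang a => InS a
    | _ => True end.

Definition Pf fl InS χ := forall D, extends (U fl InS) D ->
  forall L, supp D L χ <-> deriv D L (fl χ).

Lemma supp_limp B L a b : supp B L (Limp a b) <->
  forall C, extends B C -> forall K, hold C K a -> supp C (L ++ K) b.
Proof.
  assert (E : supp B L (Limp a b) = sem_seq B L [item_of a] (fun C M => supp C M b))
    by reflexivity. rewrite E. apply sem1.
Qed.

Lemma supp_tensor B L a b : supp B L (Tensor a b) <->
  forall C, extends B C -> forall K p,
   (forall D, extends C D -> forall Ka Kb, hold D Ka a -> hold D Kb b ->
       deriv D (K ++ (Ka ++ Kb)) p) -> deriv C (L ++ K) p.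
Proof.
  assert (E : supp B L (Tensor a b) = (forall C, extends B C -> forall K p,
    sem_seq C K [item_of a; item_of b] (fun D M => deriv D M p) -> deriv C (L ++ K) p))
    by reflexivity. rewrite E.
  assert (Hc : forall p C M M', Permutation M M' -> deriv C M p -> deriv C M' p)
    by (intros; eapply d_perm; eauto).
  split; intros H C HC K p H'; apply H; auto.
  - apply (proj2 (sem2 C K a b (fun D M => deriv D M p) (Hc p))); auto.
  - apply (proj1 (sem2 C K a b (fun D M => deriv D M p) (Hc p))); auto.
Qed.

Lemma supp_plus B L a b : supp B L (Plus a b) <->
  forall C, extends B C -> forall K p,
   (forall D, extends C D -> forall Ka, hold D Ka a -> deriv D (K ++ Ka) p) ->
   (forall D, extends C D -> forall Kb, hold D Kb b -> deriv D (K ++ Kb) p) ->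
   deriv C (L ++ K) p.
Proof.
  assert (E : supp B L (Plus a b) = (forall C, extends B C -> forall K p,
    sem_seq C K [item_of a] (fun D M => deriv D M p) ->
    sem_seq C K [item_of b] (fun D M => deriv D M p) -> deriv C (L ++ K) p))
    by reflexivity. rewrite E.
  split; intros H C HC K p H1 H2; apply H; auto.
  - apply (proj2 (sem1 C K a (fun D M => deriv D M p))); auto.
  - apply (proj2 (sem1 C K b (fun D M => deriv D M p))); auto.
  - apply (proj1 (sem1 C K a (fun D M => deriv D M p))); auto.
  - apply (proj1 (sem1 C K b (fun D M => deriv D M p))); auto.
Qed.

Lemma use_hold fl InS a (Pa : Pf fl InS a) E (HE : extends (U fl InS) E) M p :
  (forall F, extends E F -> forall Ka, hold F Ka a -> deriv F (M ++ Ka) p) ->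
  deriv E (M ++ [fl a]) p.
Proof.
  intros H. destruct (bang_dec a) as [[d ->]|[_ Ha]].
  - assert (Hs : supp E [fl (Bang d)] (Bang d)) by (apply Pa; auto; apply d_ref).
    simpl in Hs. apply d_perm with ([fl (Bang d)] ++ M); [apply Permutation_app_comm|].
    apply Hs; [apply ext_refl|]. intros D HD Hd.
    rewrite <- (app_nil_r M). apply H; auto. simpl; auto.
  - apply H; [apply ext_refl|]. rewrite Ha. apply Pa; auto. apply d_ref.
Qed.

Lemma hold_deriv fl InS a (Pa : Pf fl InS a) F (HF : extends (U fl InS) F) K :
  hold F K a -> deriv F K (fl a).
Proof. intros H. apply Pa; auto. apply hold_supp; auto. Qed.

Lemma combine_map_cons {X Y} (x : Y) (A : list X) (Cs : list (list Y)) T C' :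
  In (T, C') (combine A (map (cons x) Cs)) ->
  exists C0, C' = x :: C0 /\ In (T, C0) (combine A Cs).
Proof.
  revert Cs. induction A as [|a A IH]; intros [|c Cs]; simpl; try tauto.
  intros [E|H].
  - inversion E; subst. eauto.
  - destruct (IH Cs H) as [C0 [-> H0]]. eauto.
Qed.

Lemma concat_cons_perm {Y} (x : Y) (Cs : list (list Y)) :
  Permutation (concat (map (cons x) Cs)) (repeat x (length Cs) ++ concat Cs).
Proof.
  induction Cs as [|c Cs IH]; simpl; auto.
  apply perm_skip. rewrite IH. apply Permutation_app_swap_app.
Qed.

Lemma norm_x fl InS d (Hin : InS (Bang d)) C (HC : extends (U fl InS) C) q n :
  forall M M', Permutation M' (repeat (fl (Bang d)) (S n) ++ M) ->
  deriv C M' q -> deriv C (fl (Bang d) :: M) q.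
Proof.
  induction n; intros M M' HP H.
  - simpl in HP. eapply d_perm; [exact HP| exact H].
  - apply IHn with ([fl (Bang d)] ++ (repeat (fl (Bang d)) n ++ M)); [reflexivity|].
    apply app2 with [] (fl (Bang d)) [fl (Bang d); fl (Bang d)] q.
    + apply HC. apply u_ctr; auto.
    + apply d_ref.
    + eapply d_perm; [|exact H]. rewrite HP. simpl.
      set (R := repeat _ n ++ M).
      change (Permutation ([fl (Bang d); fl (Bang d)] ++ R) (R ++ [fl (Bang d); fl (Bang d)])).
      apply Permutation_app_comm.
Qed.

Lemma ax_elim fl InS d (Hin : InS (Bang d)) C (HC : extends (U fl InS) C) M q :
  deriv (fun r => C r \/ r = ([], [], fl d)) M q -> deriv C (fl (Bang d) :: M) q.
Proof.
  set (x := fl (Bang d)). intros H.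
  induction H as [L L' p HP _ IH | p | A S p Cs ext HB Hlen _ IHbox Hpers _ IHext _ IHS].
  - eapply d_perm; [apply perm_skip; exact HP | exact IH].
  - change (x :: [p]) with ([x] ++ [p]).
    apply app2 with [] x [] p; [apply HC; apply u_wk; auto| apply d_ref | apply d_ref].
  - set (f := fun e : list atom * atom => (x :: fst e, snd e)).
    assert (Hpers' : forall C0 d0, In (C0,d0) ext -> persistent C d0).
    { intros C0 d0 Hi. destruct (Hpers C0 d0 Hi) as [S0 [[H0|H0] Hne]].
      - exists S0; auto.
      - inversion H0; subst; congruence. }
    assert (Hpx : persistent C x).
    { exists [([], fl d)]; split; [apply HC; apply u_bangI; auto | discriminate]. }
    assert (Hfst : map fst (map f ext) = map (cons x) (map fst ext))
      by (rewrite !map_map; reflexivity).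
    assert (Hsnd : map snd (map f ext) = map snd ext) by (rewrite map_map; reflexivity).
    assert (Hext' : forall C' d', In (C', d') (map f ext) ->
              exists C0, C' = x :: C0 /\ In (C0, d') ext).
    { intros C' d' Hi. apply in_map_iff in Hi as [[C0 d0] [E Hi]].
      inversion E; subst. eauto. }
    destruct HB as [HB | HB].
    + apply norm_x with (fl:=fl) (InS:=InS) (n := length Cs + length ext)
        (M' := concat (map (cons x) Cs) ++ concat (map fst (([x], x) :: map f ext))); auto.
      * cbn [map fst concat]. rewrite Hfst.
        rewrite (concat_cons_perm x Cs), (concat_cons_perm x (map fst ext)).
        rewrite length_map. cbn [repeat app]. rewrite repeat_app. fold x.
        rewrite <- Permutation_middle. simpl. apply perm_skip.
        rewrite <- !app_assoc. apply Permutation_app_head. apply Permutation_app_swap_app.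
      * apply d_app with (A := A) (S := S); auto.
        -- rewrite length_map; auto.
        -- intros T C' Hi Q q' HQ.
           destruct (combine_map_cons x A Cs T C' Hi) as [C0 [-> Hi0]].
           exact (IHbox T C0 Hi0 Q q' HQ).
        -- intros C' d' [E|Hi]; [inversion E; subst; auto|].
           destruct (Hext' _ _ Hi) as [C0 [-> Hi0]]; eauto.
        -- intros C' d' [E|Hi]; [inversion E; subst; apply d_ref|].
           destruct (Hext' _ _ Hi) as [C0 [-> Hi0]]; eauto.
        -- intros U0 v HU. simpl. rewrite Hsnd. exact (IHS U0 v HU).
    + inversion HB; subst. destruct Cs; [|discriminate].
      apply norm_x with (fl:=fl) (InS:=InS) (n := length ext)
        (M' := concat [[x]; []] ++ concat (map fst (map f ext))); auto.
      * rewrite Hfst. rewrite (concat_cons_perm x (map fst ext)), length_map. simpl.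
        reflexivity.
      * apply d_app with (A := [[([], x)]; [([fl d], fl d)]]) (S := []).
        -- apply HC; apply u_der; auto.
        -- reflexivity.
        -- intros T C' [E|[E|[]]]; inversion E; subst; intros Q q' [E'|[]];
           inversion E'; subst; apply d_ref.
        -- intros C' d' Hi. destruct (Hext' _ _ Hi) as [C0 [-> Hi0]]; eauto.
        -- intros C' d' Hi. destruct (Hext' _ _ Hi) as [C0 [-> Hi0]]; eauto.
        -- intros U0 v [].
Qed.

Lemma flat fl InS (Hfl : forall p, fl (Atom p) = p) (Hcl : closed InS) :
  forall χ, InS χ -> Pf fl InS χ.
Proof.
  induction χ as [p| | | |a IHa b IHb|a IHa b IHb|a IHa b IHb|a IHa b IHb|d IHd];
  intros Hin D HD L; pose proof (Hcl _ Hin) as Hsub; simpl in Hsub.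
  - rewrite Hfl. simpl. tauto.
  - simpl. split; [intros _; apply appt; apply HD; constructor; auto | auto].
  - simpl. split.
    + intros H. specialize (H (fl Zero) []). rewrite app_nil_r in H. auto.
    + intros H p K. apply appz with (fl Zero); [apply HD; constructor; auto| auto].
  - simpl. split.
    + intros H. rewrite <- (app_nil_r L). apply H; [apply ext_refl|].
      apply app0. apply HD. constructor; auto.
    + intros H C HC K p Hd. apply app2 with [] (fl One) [] p.
      * apply HC, HD. constructor; auto.
      * rewrite app_nil_r. apply deriv_mono with D; auto.
      * rewrite app_nil_r. auto.
  - destruct Hsub as [Ha Hb]. specialize (IHa Ha). specialize (IHb Hb).
    rewrite supp_limp. split.
    + intros H. apply app1 with [fl a] (fl b); [apply HD; constructor; auto|].
      apply use_hold with (InS := InS); auto. intros F HF Ka Hh.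
      apply (IHb F (ext_trans _ _ _ HD HF)). apply H; auto.
    + intros H C HC K Hh. assert (HUC : extends (U fl InS) C) by eauto using ext_trans.
      apply (IHb C HUC).
      apply app2 with [] (fl (Limp a b)) [] (fl a).
      * apply HUC. constructor; auto.
      * rewrite app_nil_r. apply deriv_mono with D; auto.
      * rewrite app_nil_r. eapply hold_deriv; eauto.
  - destruct Hsub as [Ha Hb]. specialize (IHa Ha). specialize (IHb Hb).
    rewrite supp_tensor. split.
    + intros H. rewrite <- (app_nil_r L). apply H; [apply ext_refl|].
      intros F HF Ka Kb Hha Hhb. assert (HUF : extends (U fl InS) F) by eauto using ext_trans.
      simpl. apply app2 with [] (fl a) [] (fl b).
      * apply HUF. constructor; auto.
      * rewrite app_nil_r. eapply hold_deriv; eauto.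
      * rewrite app_nil_r. eapply hold_deriv; eauto.
    + intros H C HC K p Hs. assert (HUC : extends (U fl InS) C) by eauto using ext_trans.
      apply app2 with [] (fl (Tensor a b)) [fl a; fl b] p.
      * apply HUC. constructor; auto.
      * rewrite app_nil_r. apply deriv_mono with D; auto.
      * replace (K ++ [fl a; fl b]) with ((K ++ [fl a]) ++ [fl b])
          by (rewrite <- app_assoc; reflexivity).
        apply use_hold with (InS := InS); auto. intros F HF Kb Hhb.
        assert (HUF : extends (U fl InS) F) by eauto using ext_trans.
        apply d_perm with ((K ++ Kb) ++ [fl a]).
        { rewrite <- !app_assoc. apply Permutation_app_head. apply Permutation_app_comm. }
        apply use_hold with (InS := InS); auto. intros G HG Ka Hha.
        apply d_perm with (K ++ (Ka ++ Kb)).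
        { rewrite <- !app_assoc. apply Permutation_app_head. apply Permutation_app_comm. }
        apply Hs; eauto using ext_trans, hold_mono.
  - destruct Hsub as [Ha Hb]. specialize (IHa Ha). specialize (IHb Hb).
    simpl. split.
    + intros [H1 H2]. apply app1b with [] (fl a) [] (fl b).
      * apply HD. constructor; auto.
      * rewrite app_nil_r. apply IHa; auto.
      * rewrite app_nil_r. apply IHb; auto.
    + intros H. split.
      * apply IHa; auto. apply app1 with [] (fl (With a b)); [apply HD; constructor; auto|].
        rewrite app_nil_r; auto.
      * apply IHb; auto. apply app1 with [] (fl (With a b)); [apply HD; constructor; auto|].
        rewrite app_nil_r; auto.
  - destruct Hsub as [Ha Hb]. specialize (IHa Ha). specialize (IHb Hb).
    rewrite supp_plus. split.
    + intros H. rewrite <- (app_nil_r L). apply H; [apply ext_refl| |].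
      * intros F HF Ka Hh. assert (HUF : extends (U fl InS) F) by eauto using ext_trans.
        simpl. apply app1 with [] (fl a); [apply HUF; apply u_plusI1; auto|].
        rewrite app_nil_r. eapply hold_deriv; eauto.
      * intros F HF Kb Hh. assert (HUF : extends (U fl InS) F) by eauto using ext_trans.
        simpl. apply app1 with [] (fl b); [apply HUF; apply u_plusI2; auto|].
        rewrite app_nil_r. eapply hold_deriv; eauto.
    + intros H C HC K p H1 H2. assert (HUC : extends (U fl InS) C) by eauto using ext_trans.
      apply app2b with [] (fl (Plus a b)) [fl a] p [fl b] p.
      * apply HUC. constructor; auto.
      * rewrite app_nil_r. apply deriv_mono with D; auto.
      * apply use_hold with (InS := InS); auto.
      * apply use_hold with (InS := InS); auto.
  - specialize (IHd Hsub). simpl supp. split.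
    + intros H. rewrite <- (app_nil_r L). apply H; [apply ext_refl|].
      intros F HF Hs. assert (HUF : extends (U fl InS) F) by eauto using ext_trans.
      apply appbang with (fl d); [apply HUF; constructor; auto|].
      apply IHd; auto.
    + intros H C HC K p Hk. assert (HUC : extends (U fl InS) C) by eauto using ext_trans.
      set (E := fun r => C r \/ r = ([], [], fl d)).
      assert (HCE : extends C E) by (intros r Hr; left; auto).
      assert (Hs : supp E [] d).
      { apply IHd; eauto using ext_trans. apply app0. right. reflexivity. }
      pose proof (ax_elim fl InS d Hin C HUC K p (Hk E HCE Hs)) as H1.
      set (x := fl (Bang d)) in *.
      assert (H2 : deriv C (x :: x :: K) p).
      { change (x :: x :: K) with ([x] ++ (x :: K)).
        apply app2 with [] x [] p; [apply HUC; apply u_wk; auto | apply d_ref|].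
        rewrite app_nil_r; auto. }
      apply app2 with [] x [x; x] p.
      * apply HUC. apply u_ctr; auto.
      * rewrite app_nil_r. apply deriv_mono with D; auto.
      * eapply d_perm; [|exact H2].
        change (x :: x :: K) with ([x; x] ++ K). apply Permutation_app_comm.
Qed.

Lemma ext_wk (unfl : atom -> formula) X ψ (ext : list (list atom * atom)) :
  nd (map unfl X) ψ ->
  (forall C d, In (C,d) ext -> nd (map unfl C) (unfl d)) ->
  (forall C d, In (C,d) ext -> exists δ, unfl d = Bang δ) ->
  nd (map unfl (X ++ concat (map fst ext))) ψ.
Proof.
  intros H1 H2 H3. induction ext as [|[C d] ext IH].
  - simpl. rewrite app_nil_r. auto.
  - simpl. destruct (H3 C d (or_introl eq_refl)) as [δ Hδ].
    apply nd_perm with (map unfl C ++ map unfl (X ++ concat (map fst ext))).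
    + rewrite !map_app. rewrite Permutation_app_swap_app. reflexivity.
    + apply nd_wk with δ; [rewrite <- Hδ; apply H2; left; reflexivity|].
      apply IH; intros; [apply H2|apply (H3 C0 d0)]; right; auto.
Qed.

Definition unbang (f : formula) := match f with Bang x => x | _ => f end.

Lemma prems_concat (Δ : list formula) : concat (map fst (map (fun f => ([f], f)) Δ)) = Δ.
Proof. induction Δ; simpl; f_equal; auto. Qed.

Lemma prems_ok (Δ : list formula) : forall G f, In (G,f) (map (fun f => ([f], f)) Δ) -> nd G f.
Proof. intros G f Hi. apply in_map_iff in Hi as [x [E _]]. inversion E; subst. apply nd_ax. Qed.

Lemma nd_top_any Δ : nd Δ Top.
Proof.
  rewrite <- (prems_concat Δ). apply nd_topI. apply prems_ok.
Qed.

Lemma nd_zero_any X Δ χ : nd X Zero -> nd (X ++ Δ) χ.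
Proof.
  intros H. apply nd_perm with (Δ ++ X); [apply Permutation_app_comm|].
  rewrite <- (prems_concat Δ) at 1. apply nd_zeroE; auto. apply prems_ok.
Qed.

Lemma back fl InS unfl (Hcl : closed InS) (Hun : forall χ, InS χ -> unfl (fl χ) = χ) L p :
  deriv (U fl InS) L p -> nd (map unfl L) (unfl p).
Proof.
  intros H.
  induction H as [L L' p HP _ IH | p | A S p Cs ext HB Hlen _ IHbox Hpers _ IHext _ IHS].
  - eapply nd_perm; [apply Permutation_map; exact HP| exact IH].
  - simpl. apply nd_ax.
  - assert (Hext1 : forall C d, In (C,d) ext -> exists δ, unfl d = Bang δ).
    { intros C d Hi. destruct (Hpers C d Hi) as [S0 [HU Hne]].
      inversion HU; subst; [congruence|]. eexists; apply Hun; auto. }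
    inversion HB; subst;
    match goal with Hx : InS _ |- _ => pose proof (Hcl _ Hx) as Hc'; simpl in Hc' end;
    (destruct Cs as [|C1 [|C2 [|C3 Cs]]]; simpl in Hlen; try discriminate).
    all: try (match goal with |- nd _ (_ (_ (Bang _))) => fail 1 | _ => apply ext_wk; auto end).
    all: try pose proof (IHbox _ _ (or_introl eq_refl) _ _ (or_introl eq_refl)) as B1.
    all: try pose proof (IHbox _ _ (or_intror (or_introl eq_refl)) _ _ (or_introl eq_refl)) as B2.
    all: try pose proof (IHbox _ _ (or_introl eq_refl) _ _ (or_intror (or_introl eq_refl))) as B3.
    all: try pose proof (IHbox _ _ (or_intror (or_introl eq_refl)) _ _ (or_intror (or_introl eq_refl))) as B4.
    all: simpl concat in *; rewrite ?app_nil_r in *; rewrite ?map_app in *; simpl map in *.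
    all: repeat (rewrite Hun in * by tauto).
    all: try solve [ eapply nd_limpI; eauto | eapply nd_limpE; eauto | eapply nd_tensorI; eauto
               | eapply nd_tensorE; eauto | apply nd_oneI | eapply nd_oneE; eauto
               | eapply nd_withI; eauto | eapply nd_withE1; eauto | eapply nd_withE2; eauto
               | eapply nd_plusI1; eauto | eapply nd_plusI2; eauto | eapply nd_plusE; eauto
               | eapply nd_zero_any; eauto | apply nd_top_any
               | eapply nd_der; eauto | eapply nd_wk; eauto | eapply nd_ctr; eauto ].
    set (prems := map (fun e => (map unfl (fst e), unbang (unfl (snd e)))) ext).
    assert (E1 : concat (map fst prems) = map unfl (concat (map fst ext))).
    { unfold prems. rewrite map_map. simpl. rewrite concat_map, map_map. reflexivity. }
    simpl. rewrite <- E1. apply nd_prom.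
    + intros G ψ Hi. unfold prems in Hi. apply in_map_iff in Hi as [[C d0] [E Hi]].
      inversion E; subst. destruct (Hext1 C d0 Hi) as [δ Hδ]. simpl. rewrite Hδ.
      simpl. rewrite <- Hδ. apply IHext; auto.
    + assert (E2 : map (fun pr => Bang (snd pr)) prems = map unfl (map snd ext)).
      { unfold prems. rewrite !map_map. apply map_ext_in. intros [C d0] Hi. simpl.
        destruct (Hext1 C d0 Hi) as [δ Hδ]. rewrite Hδ. reflexivity. }
      rewrite E2. specialize (IHS [] (fl d) (or_introl eq_refl)).
      rewrite app_nil_r, Hun in IHS by tauto. exact IHS.
Qed.

Lemma glue fl InS : forall G, (forall a, In a G -> Pf fl InS a) ->
  forall E, extends (U fl InS) E -> forall M p,
  (forall F, extends E F -> forall K, hl F K G -> deriv F (M ++ K) p) ->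
  deriv E (M ++ map fl G) p.
Proof.
  induction G as [|a G IH]; intros HP E HE M p H.
  - simpl. apply H; [apply ext_refl | apply hl_nil].
  - simpl. apply d_perm with ((M ++ map fl G) ++ [fl a]).
    { rewrite <- app_assoc. apply Permutation_app_head. symmetry. apply Permutation_cons_append. }
    apply use_hold with InS; auto. { apply HP; left; auto. }
    intros F HF Ka Hh.
    apply d_perm with ((M ++ Ka) ++ map fl G).
    { rewrite <- !app_assoc. apply Permutation_app_head, Permutation_app_comm. }
    apply IH; eauto using ext_trans.
    { intros; apply HP; right; auto. }
    intros F' HF' K Hl. rewrite <- app_assoc. apply H; [eauto using ext_trans|].
    apply hl_cons; auto. apply hold_mono with F; auto.
Qed.

Fixpoint subf (χ : formula) : list formula :=
  χ :: match χ with
       | Limp a b | Tensor a b | With a b | Plus a b => subf a ++ subf b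
       | Bang a => subf a
       | _ => [] end.

Lemma subf_self χ : In χ (subf χ).
Proof. destruct χ; left; auto. Qed.

Lemma subf_trans ψ : forall χ, In χ (subf ψ) -> incl (subf χ) (subf ψ).
Proof.
  induction ψ; simpl; intros χ [<-|H]; try apply incl_refl; try (simpl in H; tauto).
  all: try (apply in_app_or in H as [H|H]; [apply incl_tl, incl_appl | apply incl_tl, incl_appr]; auto).
  all: apply incl_tl; auto.
Qed.

Lemma sub_in l χ a : In χ (concat (map subf l)) -> In a (subf χ) ->
  In a (concat (map subf l)).
Proof.
  intros H1 H2. apply in_concat in H1 as [s [Hs Hχ]].
  apply in_map_iff in Hs as [ψ [<- Hψ]].
  apply in_concat. exists (subf ψ). split; [apply in_map; auto|].
  apply (subf_trans ψ χ Hχ); auto.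
Qed.

Lemma closed_subs l : closed (fun χ => In χ (concat (map subf l))).
Proof.
  intros χ H. destruct χ; auto;
  try (split; apply sub_in with (1 := H); simpl; right; apply in_or_app;
       [left|right]; apply subf_self).
  apply sub_in with (1 := H); simpl; right; apply subf_self.
Qed.

Definition formula_eq_dec (x y : formula) : {x = y} + {x <> y}.
Proof. decide equality; apply Nat.eq_dec. Defined.

Fixpoint idx (x : formula) (l : list formula) : nat :=
  match l with
  | [] => 0
  | y :: l' => if formula_eq_dec x y then 0 else S (idx x l')
  end.

Lemma idx_nth x l : In x l -> nth (idx x l) l Top = x.
Proof.
  induction l as [|y l IH]; simpl; [tauto|].
  destruct (formula_eq_dec x y); [subst; auto|].
  intros [->|H]; [congruence|auto].
Qed.

Definition atom_of (χ : formula) : nat := match χ with Atom p => p | _ => 0 end.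

Definition flf (subs : list formula) (N : nat) (χ : formula) : atom :=
  match χ with Atom p => p | _ => N + idx χ subs end.

Definition unflf (subs : list formula) (N : nat) (n : atom) : formula :=
  if n <? N then Atom n else nth (n - N) subs Top.

Lemma unfl_fl subs χ : In χ subs ->
  let N := S (list_max (map atom_of subs)) in
  unflf subs N (flf subs N χ) = χ.
Proof.
  intros H N. unfold unflf, flf.
  assert (Hmax : forall x, In x subs -> atom_of x < N).
  { intros x Hx. unfold N. apply Nat.lt_succ_r.
    assert (Hf : Forall (fun k => k <= list_max (map atom_of subs)) (map atom_of subs))
      by (apply list_max_le; auto).
    rewrite Forall_forall in Hf. apply Hf. apply in_map; auto. }
  clearbody N.
  assert (G : forall i, (if N + i <? N then Atom (N+i) else nth (N + i - N) subs Top)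
                        = nth i subs Top).
  { intros i. replace (N + i <? N) with false by (symmetry; apply Nat.ltb_ge; lia).
    replace (N + i - N) with i by lia. reflexivity. }
  destruct χ; try (rewrite G; apply idx_nth; auto).
  specialize (Hmax _ H). simpl in Hmax. apply Nat.ltb_lt in Hmax. rewrite Hmax. auto.
Qed.

Theorem theorem7 (Γ : list formula) (φ : formula) :
  valid Γ φ -> nd Γ φ.
Proof.
  intros Hv.
  set (subs := concat (map subf (φ :: Γ))).
  set (InS := fun χ => In χ subs).
  set (N := S (list_max (map atom_of subs))).
  set (fl := flf subs N). set (unfl := unflf subs N).
  assert (Hcl : closed InS) by apply closed_subs.
  assert (Hfl : forall p, fl (Atom p) = p) by reflexivity.
  assert (Hun : forall χ, InS χ -> unfl (fl χ) = χ) by (intros; apply unfl_fl; auto).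
  assert (HPf : forall χ, InS χ -> Pf fl InS χ) by (apply flat; auto).
  assert (Hin : forall a, In a (φ :: Γ) -> InS a).
  { intros a Ha. unfold InS, subs. apply in_concat. exists (subf a).
    split; [apply in_map; auto | apply subf_self]. }
  assert (Hd : deriv (U fl InS) (map fl Γ) (fl φ)).
  { destruct Γ as [|g Γ'].
    - apply (HPf φ (Hin φ (or_introl eq_refl)) _ (ext_refl _)). exact (Hv (U fl InS)).
    - change (map fl (g :: Γ')) with ([] ++ map fl (g :: Γ')).
      apply glue with InS; [intros a Ha; apply HPf, Hin; right; auto | apply ext_refl|].
      intros F HF K Hl. apply (HPf φ (Hin φ (or_introl eq_refl)) F HF).
      apply (sem_list (U fl InS) [] (g :: Γ') (fun C M => supp C M φ)); auto.
      + intros C M M' HP Hs. eapply supp_perm; eauto.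
      + discriminate.
      + exact (Hv (U fl InS)). }
  apply (back fl InS unfl Hcl Hun) in Hd.
  rewrite map_map, Hun in Hd by (apply Hin; left; auto).
  rewrite (map_ext_in _ (fun x => x)) in Hd.
  - rewrite map_id in Hd. exact Hd.
  - intros a Ha. apply Hun, Hin. right; auto.
Qed.
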